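(* For every integer $n\ge 3$, $$m^*(n,3)\le \left\lceil \frac{3}{\log_2 3}\log_2 n\right\rceil.$$
   Context: For a binary matrix $M$ and a nonempty set $S$ of its columns, $S$ is a stopping set if the submatrix formed by $S$ has no row with exactly one $1$; $s(M)$ is the minimum size of a stopping set ($+\infty$ if none). $M$ is $d$-decodable if $s(M)\ge d+1$. $m^*(n,d)$ is the minimum $m$ such that an $m\times n$ $d$-decodable binary matrix exists. *)

(* Defs.v *)
From HB Require Import structures.
From Stdlib Require Import Reals.
From mathcomp Require Import all_boot all_order all_algebra.
From mathcomp Require Import Rstruct.
Set Implicit Arguments. Unset Strict Implicit. Unset Printing Implicit Defensive.

Definition stopping_set (m n : nat) (M : 'M[bool]_(m, n)) (S : {set 'I_n}) : bool :=
  (S != set0) && [forall i : 'I_m, #|[set j in S | M i j]| != 1%N].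

(* d-decodable: s(M) >= d+1, where s(M) is the minimum size of a stopping set
   (+oo if none), i.e. every stopping set has size at least d+1. *)
Definition decodable (m n : nat) (M : 'M[bool]_(m, n)) (d : nat) : bool :=
  [forall S : {set 'I_n}, stopping_set M S ==> (d + 1 <= #|S|)%N].

Definition has_decodable (n d m : nat) : bool :=
  [exists M : 'M[bool]_(m, n), decodable M d].

(* The identity matrix has no stopping set, hence is d-decodable for all d. *)
Lemma has_decodable_id (n d : nat) : has_decodable n d n.
Proof.
apply/existsP; exists (\matrix_(i < n, j < n) (i == j))%R.
apply/forallP => S; apply/implyP => /andP [/set0Pn [j jS] /forallP H].
move: (H j); have -> : [set j0 in S | (\matrix_(i < n, j1 < n) (i == j1))%R j j0]
   = [set j].
  apply/setP => k; rewrite !inE mxE eq_sym.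
  by case: (eqVneq k j) => [->|_]; rewrite ?jS ?andbT ?andbF.
by rewrite cards1.
Qed.

Lemma ex_has_decodable (n d : nat) : exists m, has_decodable n d m.
Proof. by exists n; exact: has_decodable_id. Qed.

Definition mstar (n d : nat) : nat :=
  ex_minn (@ex_has_decodable n d).

(* Main.v *)
Require Import Defs.
From Stdlib Require Import Reals Lra Lia.
Section RealPart.
Local Open Scope R_scope.

Lemma real_part (n k : nat) : (3 <= n)%nat ->
  INR 3 * / (ln 3 * / ln 2) * (ln (INR n) * / ln 2) <= INR k ->
  (n ^ 3 <= 3 ^ k)%nat.
Proof.
intros Hn H.
assert (l2 : 0 < ln 2) by (rewrite <- ln_1; apply ln_increasing; lra).
assert (l3 : 0 < ln 3) by (rewrite <- ln_1; apply ln_increasing; lra).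
assert (e3 : INR 3 = 3) by (simpl; ring).
assert (Hn' : 3 <= INR n) by (rewrite <- e3; apply le_INR; exact Hn).
assert (E : INR 3 * / (ln 3 * / ln 2) * (ln (INR n) * / ln 2) = 3 * ln (INR n) / ln 3).
{ rewrite e3; field; lra. }
rewrite E in H.
assert (H2 : 3 * ln (INR n) <= INR k * ln 3).
{ apply (Rmult_le_compat_r (ln 3)) in H; [|lra].
  replace (3 * ln (INR n) / ln 3 * ln 3) with (3 * ln (INR n)) in H by (field; lra).
  exact H. }
destruct (Nat.le_gt_cases (n ^ 3) (3 ^ k)) as [h|h]; [exact h|exfalso].
apply lt_INR in h. rewrite !pow_INR in h.
apply ln_increasing in h.
- rewrite !ln_pow in h; try lra. rewrite e3 in h. lra.
- apply pow_lt. lra.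
Qed.

Lemma real_pos (n : nat) : (3 <= n)%nat ->
  0 <= INR 3 * / (ln 3 * / ln 2) * (ln (INR n) * / ln 2).
Proof.
intros Hn.
assert (l2 : 0 < ln 2) by (rewrite <- ln_1; apply ln_increasing; lra).
assert (l3 : 0 < ln 3) by (rewrite <- ln_1; apply ln_increasing; lra).
assert (e3 : INR 3 = 3) by (simpl; ring).
assert (Hn' : 3 <= INR n) by (rewrite <- e3; apply le_INR; exact Hn).
assert (ln3n : 0 < ln (INR n)) by (rewrite <- ln_1; apply ln_increasing; lra).
apply Rmult_le_pos; apply Rmult_le_pos; try lra.
- apply Rlt_le, Rinv_0_lt_compat, Rmult_lt_0_compat; [lra|]. apply Rinv_0_lt_compat; lra.
- apply Rlt_le, Rinv_0_lt_compat; lra.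
Qed.

End RealPart.

From mathcomp Require Import all_boot all_order all_algebra.
From mathcomp Require Import Rstruct zify.

Set Implicit Arguments. Unset Strict Implicit. Unset Printing Implicit Defensive.

Definition uniq1 (T : eqType) (P : pred T) (L : seq T) :=
  exists2 x, x \in L & P x /\ forall y, y \in L -> P y -> y = x.

Definition uniq1b (T : eqType) (P : pred T) (L : seq T) :=
  has (fun x => P x && all (fun y => P y ==> (y == x)) L) L.

Lemma uniq1bP (T : eqType) (P : pred T) L : uniq1b P L -> uniq1 P L.
Proof.
case/hasP => x xL /andP [Px /allP H]; exists x => //; split => // y yL Py.
by apply/eqP; move: (H y yL); rewrite Py.
Qed.

Definition good (R T : finType) (M : R -> T -> bool) :=
  forall a b c : T, exists r, uniq1 (M r) [:: a; b; c].

Definition goodb (R T : finType) (M : R -> T -> bool) :=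
  [forall a, forall b, forall c, [exists r, uniq1b (M r) [:: a; b; c]]].

Lemma goodbP (R T : finType) (M : R -> T -> bool) : goodb M -> good M.
Proof.
move=> /forallP H a b c; move: (H a) => /forallP /(_ b) /forallP /(_ c) /existsP [r Hr].
by exists r; apply: uniq1bP.
Qed.

Definition strong (R T : finType) (M : R -> T -> bool) :=
  good M /\ forall x y, x != y -> exists r, M r y && ~~ M r x.

Definition strongb (R T : finType) (M : R -> T -> bool) :=
  goodb M && [forall x, forall y, (x != y) ==> [exists r, M r y && ~~ M r x]].

Lemma strongbP (R T : finType) (M : R -> T -> bool) : strongb M -> strong M.
Proof.
case/andP => /goodbP G /forallP H; split => // x y nxy.
by move: (H x) => /forallP /(_ y) /implyP /(_ nxy) /existsP.
Qed.

Lemma three (T : eqType) (a b c u v w y : T) :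
  u \in [:: a; b; c] -> v \in [:: a; b; c] -> w \in [:: a; b; c] ->
  y \in [:: a; b; c] -> u != v -> u != w -> v != w -> y \in [:: u; v; w].
Proof.
rewrite !inE.
case/or3P => /eqP ->; case/or3P => /eqP ->; case/or3P => /eqP ->;
case/or3P => /eqP -> ; rewrite ?eqxx ?orbT //.
Qed.


Definition prodM (R1 T1 R2 T2 : finType) (M1 : R1 -> T1 -> bool) (M2 : R2 -> T2 -> bool)
  (r : R1 + R2) (t : T1 * T2) : bool :=
  match r with inl r1 => M1 r1 t.1 | inr r2 => M2 r2 t.2 end.

Lemma prod_good (R1 T1 R2 T2 : finType) (M1 : R1 -> T1 -> bool) (M2 : R2 -> T2 -> bool) :
  strong M1 -> good M2 -> good (prodM M1 M2).
Proof.
move=> [G1 S1] G2 a b c.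
set L := [:: a; b; c].
have [allA|] := boolP (all (fun y => y.1 == a.1) L).
  have [r2 [x2 x2in [Px2 U2]]] := G2 a.2 b.2 c.2.
  have : x2 \in map snd L by [].
  case/mapP => x xL ex2.
  exists (inr r2); exists x => //; split; first by rewrite /= -ex2.
  move=> y yL /= Py.
  have := U2 y.2 (map_f snd yL) Py; rewrite ex2 => e2.
  move/allP: allA => allA.
  have e1 : y.1 = x.1 by rewrite (eqP (allA y yL)) (eqP (allA x xL)).
  by rewrite [y]surjective_pairing [x]surjective_pairing e1 e2.
rewrite -has_predC => /hasP [w wL /= nw].
have [r1 [x1 x1in [Px1 U1]]] := G1 a.1 b.1 c.1.
have x1in' : x1 \in map fst L by [].
have U1' : forall y, y \in L -> M1 r1 y.1 -> y.1 = x1.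
  by move=> y yL; apply: U1; exact: (map_f fst yL).
have [two|] := boolP (has (fun u => has (fun v => (u != v) && (u.1 == x1) && (v.1 == x1)) L) L).
  case/hasP: two => u uL /hasP [v vL /andP [/andP [nuv /eqP u1] /eqP v1]].
  have [w' w'L nw'] : exists2 w', w' \in L & w'.1 != x1.
    case: (eqVneq a.1 x1) => ea; last by exists a => //; rewrite inE eqxx.
    by exists w => //; rewrite -ea.
  have [r' /andP [Mw Mx]] := S1 x1 w'.1 ltac:(by rewrite eq_sym).
  exists (inl r'); exists w' => //; split; first by [].
  move=> y yL /= My.
  have ny : y.1 != x1 by apply: contraTneq My => ->.
  have := three uL vL w'L yL nuv.
  have nuw : u != w' by apply: contraNneq nw' => <-; rewrite u1.
  have nvw : v != w' by apply: contraNneq nw' => <-; rewrite v1.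
  move=> /(_ nuw nvw); rewrite !inE => /or3P [/eqP e|/eqP e|/eqP //].
    by move: ny; rewrite e u1 eqxx.
  by move: ny; rewrite e v1 eqxx.
move=> none.
case/mapP: x1in' => x xL ex1.
exists (inl r1); exists x => //; split; first by rewrite /= -ex1.
move=> y yL /= My; have ey := U1' y yL My.
apply/eqP; apply: contraNT none => nyx; apply/hasP; exists y => //; apply/hasP; exists x => //.
by rewrite nyx ey ex1 eqxx.
Qed.

Lemma prod_strong (R1 T1 R2 T2 : finType) (M1 : R1 -> T1 -> bool) (M2 : R2 -> T2 -> bool) :
  strong M1 -> strong M2 -> strong (prodM M1 M2).
Proof.
move=> S1 [G2 S2]; split; first exact: prod_good.
case=> x1 x2 [y1 y2] nxy.
case: (eqVneq x1 y1) => [e|n1].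
  have n2 : x2 != y2 by apply: contraNneq nxy => ->; rewrite e.
  by have [r H] := S2 _ _ n2; exists (inr r).
by have [r H] := S1.2 _ _ n1; exists (inl r).
Qed.


Definition Good (m N : nat) := exists (R T : finType) (M : R -> T -> bool),
  #|R| = m /\ N <= #|T| /\ good M.

Definition goodn (p q : nat) (Mn : nat -> nat -> bool) :=
  all (fun a => all (fun b => all (fun c =>
    has (fun r => uniq1b (Mn r) [:: a; b; c]) (iota 0 p)) (iota 0 q)) (iota 0 q)) (iota 0 q).

Definition strongn (p q : nat) (Mn : nat -> nat -> bool) :=
  goodn p q Mn && all (fun x => all (fun y => (x != y) ==>
    has (fun r => Mn r y && ~~ Mn r x) (iota 0 p)) (iota 0 q)) (iota 0 q).

Definition ordM p q (Mn : nat -> nat -> bool) (r : 'I_p) (t : 'I_q) := Mn r t.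

Lemma goodnP p q Mn : goodn p q Mn -> good (ordM (p:=p) (q:=q) Mn).
Proof.
move=> H a b c.
have mem (z : 'I_q) : (z : nat) \in iota 0 q by rewrite mem_iota /=.
move/allP: H => /(_ _ (mem a)) /allP /(_ _ (mem b)) /allP /(_ _ (mem c)) /hasP [r rin].
move=> /uniq1bP [x xin [Px U]].
have rp : r < p by move: rin; rewrite mem_iota.
exists (Ordinal rp).
have : x \in map val [:: a; b; c] by [].
case/mapP => x' x'in ex.
exists x' => //; split; first by rewrite /ordM /= -ex.
move=> y yin Py; apply: val_inj; rewrite -ex; apply: U => //; by rewrite (map_f val yin).

Qed.

Lemma strongnP p q Mn : strongn p q Mn -> strong (ordM (p:=p) (q:=q) Mn).
Proof.
case/andP => /goodnP G H; split => // x y nxy.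
have mem (z : 'I_q) : (z : nat) \in iota 0 q by rewrite mem_iota /=.
move/allP: H => /(_ _ (mem x)) /allP /(_ _ (mem y)) /implyP.
case/(_ nxy)/hasP => r rin Hr.
have rp : r < p by move: rin; rewrite mem_iota.
by exists (Ordinal rp).
Qed.

Definition W3 := ordM (p:=3) (q:=3) (fun r t => r == t).
Lemma W3_strong : strong W3.
Proof. apply: strongnP; vm_compute; reflexivity. Qed.

Definition Sp4 := ordM (p:=4) (q:=5) (fun r t => (t == 4) || (r == t)).
Lemma Sp4_good : good Sp4.
Proof. apply: goodnP; vm_compute; reflexivity. Qed.

Definition C4 := ordM (p:=4) (q:=4) (fun r t => (r == t) || (r == (t + 1) %% 4)).
Lemma C4_strong : strong C4.
Proof. apply: strongnP; vm_compute; reflexivity. Qed.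

Definition Sp5 := ordM (p:=5) (q:=6) (fun r t => (t == 5) || (r == t)).
Lemma Sp5_good : good Sp5.
Proof. apply: goodnP; vm_compute; reflexivity. Qed.

Lemma Good3 : Good 3 3.
Proof. by exists 'I_3, 'I_3, W3; rewrite !card_ord; split=> //; split => //; case: W3_strong. Qed.
Lemma Good4 : Good 4 5.
Proof. by exists 'I_4, 'I_5, Sp4; rewrite !card_ord; split=> //; split => //; exact: Sp4_good. Qed.
Lemma Good5 : Good 5 6.
Proof. by exists 'I_5, 'I_6, Sp5; rewrite !card_ord; split=> //; split => //; exact: Sp5_good. Qed.
Lemma Good8 : Good 8 20.
Proof.
exists ('I_4 + 'I_4)%type, ('I_4 * 'I_5)%type, (prodM C4 Sp4).
rewrite card_sum card_prod !card_ord; split=> //; split => //.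
exact: prod_good C4_strong Sp4_good.
Qed.
Lemma GoodS m N : Good m N -> Good (m + 3) (3 * N).
Proof.
case=> R [T [M [cR [cT G]]]].
exists ('I_3 + R)%type, ('I_3 * T)%type, (prodM W3 M).
rewrite card_sum card_prod !card_ord cR addnC; split=> //; split; first by rewrite leq_mul2l.
exact: prod_good W3_strong G.
Qed.


Lemma small_set (T : finType) (S : {set T}) : S != set0 -> #|S| <= 3 ->
  exists a b c, forall y, (y \in S) = (y \in [:: a; b; c]).
Proof.
case/set0Pn => x0 x0S; rewrite cardE.
have Hm y : (y \in S) = (y \in enum S) by rewrite mem_enum.
case E: (enum S) => [|a [|b [|c [|d s]]]] H3.
- by move: (Hm x0); rewrite E x0S.
- by exists a; exists a; exists a; move=> y; rewrite Hm E !inE; case: (y == a).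
- by exists a; exists b; exists b; move=> y; rewrite Hm E !inE; case: (y == b); rewrite ?orbT.
- by exists a; exists b; exists c; move=> y; rewrite Hm E.
- by [].
Qed.


Lemma Good_dec m N n : Good m N -> n <= N -> has_decodable n 3 m.
Proof.
case=> R [T [M [cR [cT G]]]] nN.
have nT : n <= #|T| by apply: leq_trans cT.
pose f (j : 'I_n) : T := enum_val (widen_ord nT j).
have finj : injective f.
  by move=> i j /enum_val_inj /(congr1 val) /= /val_inj.
pose g (i : 'I_m) : R := enum_val (cast_ord (esym cR) i).
pose g' (r : R) : 'I_m := cast_ord cR (enum_rank r).
have gK r : g (g' r) = r by rewrite /g /g' cast_ordK enum_rankK.
apply/existsP; exists (\matrix_(i, j) M (g i) (f j))%R.
apply/forallP => S; apply/implyP => /andP [S0 /forallP H].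
rewrite leqNgt; apply/negP => S3.
have [a [b [c Sabc]]] := small_set S0 S3.
have [r [x xin [Mx U]]] := G (f a) (f b) (f c).
have : x \in map f [:: a; b; c] by [].
case/mapP => j jin ex.
move: (H (g' r)); apply/negP; rewrite negbK.
rewrite (_ : [set k in S | _] = [set j]) ?cards1 //; apply/setP => k.
rewrite !inE mxE gK Sabc.
case: (eqVneq k j) => [->|nkj]; first by rewrite jin -ex Mx.
apply/negbTE; apply/negP => /andP [kin Mk].
by move/eqP: nkj; apply; apply: finj; rewrite -ex; apply: U => //; rewrite (map_f f kin).
Qed.

Lemma Good_all k : Good (3 + 3 * k) (3 ^ k.+1) /\ Good (4 + 3 * k) (5 * 3 ^ k)
   /\ Good (8 + 3 * k) (20 * 3 ^ k).
Proof.
elim: k => [|k [A [B C]]]; first by rewrite !muln0 !addn0 !muln1; split; [exact: Good3|split; [exact: Good4|exact: Good8]].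
have e a : a + 3 * k.+1 = a + 3 * k + 3 by lia.
rewrite !e expnS.
split; first exact: GoodS.
split; first by rewrite expnS mulnCA; exact: GoodS.
by rewrite expnS mulnCA; exact: GoodS.
Qed.


Lemma key n m : 3 <= n -> n ^ 3 <= 3 ^ m -> has_decodable n 3 m.
Proof.
move=> n3 H.
have m3 : 3 <= m.
  rewrite leqNgt; apply/negP => m2.
  have h1 : 3 ^ m <= 3 ^ 2 by apply: leq_pexp2l => //; lia.
  have h2 : 3 ^ 3 <= n ^ 3 by rewrite leq_exp2r.
  have := leq_trans h2 (leq_trans H h1); by [].
have [q [r [em r3]]] : exists q r, m = 3 + 3 * q + r /\ r < 3.
  exists ((m - 3) %/ 3), ((m - 3) %% 3); split; last by rewrite ltn_mod.
  by move: (divn_eq (m - 3) 3); lia.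
subst m.
have e27 a p : a ^ 3 * 27 ^ p = (a * 3 ^ p) ^ 3.
  by rewrite expnMn -expnM (mulnC p 3) expnM.
clear m3; case: r r3 H => [|[|[|//]]] _ H.
- case: (Good_all q) => G _.
  rewrite addn0; apply: (Good_dec G); rewrite -(leq_exp2r _ _ (isT : 0 < 3)).
  apply: (leq_trans H); rewrite -expnM; apply: leq_pexp2l => //; lia.
- case: (Good_all q) => _ [G _].
  rewrite (_ : 3 + 3 * q + 1 = 4 + 3 * q) in H *; last lia.
  apply: (Good_dec G); rewrite -(leq_exp2r _ _ (isT : 0 < 3)).
  apply: (leq_trans H); rewrite -e27 expnD (mulnC 3 q) expnM.
  by rewrite -expnM (mulnC q 3) expnM; apply: leq_mul.
- case: q H => [|q] H.
  + apply: (Good_dec Good5).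
    rewrite leqNgt; apply/negP => n7.
    have : 7 ^ 3 <= n ^ 3 by rewrite leq_exp2r.
    by move=> h; have := leq_trans h H.
  + case: (Good_all q) => _ [_ G].
    rewrite (_ : 3 + 3 * q.+1 + 2 = 8 + 3 * q) in H *; last lia.
    apply: (Good_dec G); rewrite -(leq_exp2r _ _ (isT : 0 < 3)).
    apply: (leq_trans H); rewrite -e27 expnD (mulnC 3 q) expnM.
    by rewrite -expnM (mulnC q 3) expnM; apply: leq_mul.
Qed.

Lemma mstar_le n m : 3 <= n -> n ^ 3 <= 3 ^ m -> mstar n 3 <= m.
Proof.
move=> n3 H; rewrite /mstar; case: ex_minnP => k _ min; apply: min.
exact: key.
Qed.


Unset Implicit Arguments.

Lemma expn_pow (a b : nat) : (a ^ b)%N = Nat.pow a b.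
Proof. by elim: b => // b IH; rewrite expnS IH. Qed.

Theorem theorem5p5 (n : nat) (hn : (3 <= n)%N) :
  ((mstar n 3)%:Z <=
   Num.ceil ((3 / (ln 3 / ln 2) * (ln (INR n) / ln 2))%R : R))%R.
Proof.
set x := ((3 / (ln 3 / ln 2) * (ln (INR n) / ln 2))%R : R).
have hx := Num.Theory.ceil_ge x.
have x0 : (0 <= x)%R.
  apply/RleP; rewrite /x -INRE; exact: (real_pos n (elimT leP hn)).
have c0 : (0 <= Num.ceil x)%R.
  rewrite Num.Theory.ceil_ge0.
  apply: (Order.POrderTheory.lt_le_trans _ x0); by rewrite Num.Theory.ltrN10.
case E: (Num.ceil x) c0 hx => [k|k] // _.
rewrite /= => hx.
rewrite lez_nat; apply: mstar_le => //.
rewrite !expn_pow; apply/leP.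
apply: (real_part n k (elimT leP hn)); apply/RleP.
rewrite (INRE 3) (INRE k); exact: hx.
Qed.
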